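(* Let $R=R_A\,\dot\cup\,R_D$ be a finite set of $n=|R|$ resources partitioned into those of an attacker $A$ and those of all other entities $D$, and let $r=|R_A|/|R_D|$. Suppose each resource is online independently with probability $\rho$ (the steady state). Let $\phi_R$ be the random variable equal to the number of online resources in $R_A$ divided by the number of online resources in $R_D$. Then for every $\alpha\in(0,1/2)$, $$\Pr\left[\phi_R \ge \left(1+\frac{2\alpha}{1-\alpha}\right) r\right] < \left(\frac{e^{\alpha}}{(1+\alpha)^{1+\alpha}}\right)^{\rho n r/(1+r)} + \left(\frac{e^{-\alpha}}{(1-\alpha)^{1-\alpha}}\right)^{\rho n/(1+r)}.$$
   Context: In the steady state, each resource's online/offline status follows the stationary distribution of a two-state Markov chain with failure probability $p$ and recovery probability $q$, so it is online with probability $\rho=q/(p+q)$, independently of all other resources. *)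

(* Defs.v *)
From HB Require Import structures.
From mathcomp Require Import all_boot all_order all_algebra.
From mathcomp Require Import all_classical all_reals all_analysis.
Set Implicit Arguments. Unset Strict Implicit. Unset Printing Implicit Defensive.
Import Order.TTheory GRing.Theory Num.Theory.
Local Open Scope ring_scope.

Section ResourceModel.
Variables (R : realType) (T : finType).

(* An outcome: for every resource x : T, whether x is online (true) or not. *)
Definition outcome := {ffun T -> bool}.

Definition outcome_prob (rho : R) (w : outcome) : R :=
  \prod_(x : T) (if w x then rho else 1 - rho).

Definition Prob (rho : R) (E : pred outcome) : R :=
  \sum_(w : outcome | E w) outcome_prob rho w.

Definition num_online (A : {set T}) (w : outcome) : nat :=
  #|[set x in A | w x]|.

(* The event  phi_R >= t,  where phi_R = (#online in RA) / (#online in RD).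
   Convention: when no resource of RD is online, phi_R = +oo, so the event holds. *)
Definition phi_ge (RA RD : {set T}) (t : R) (w : outcome) : bool :=
  (num_online RD w == 0)%N ||
  (t <= (num_online RA w)%:R / (num_online RD w)%:R).

End ResourceModel.

(* Main.v *)
Require Import Defs.
From HB Require Import structures.
From mathcomp Require Import all_boot all_order all_algebra.
From mathcomp Require Import all_classical all_reals all_analysis.
From mathcomp Require Import ring lra.
Import Order.TTheory GRing.Theory Num.Theory.
Local Open Scope ring_scope.

Lemma mgf (R : realType) (T : finType) (S : {set T}) (rho s : R) :
  \sum_(w : outcome T) outcome_prob rho w * s ^+ num_online S w =
  (rho * s + (1 - rho)) ^+ #|S|.
Proof.
have E w : outcome_prob rho w * s ^+ num_online S w =
   \prod_(x : T) ((if w x then rho else 1 - rho) * (if w x && (x \in S) then s else 1)).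
  rewrite big_split /= /num_online; congr (_ * _).
  rewrite -prodr_const big_mkcond; apply: eq_bigr => x _.
  by rewrite inE andbC.
under eq_bigr => w _ do rewrite E.
rewrite -(bigA_distr_bigA (fun x (b : bool) => (if b then rho else 1 - rho) * (if b && (x \in S) then s else 1))) /=.
rewrite -prodr_const [RHS]big_mkcond /=.
apply: eq_bigr => x _; rewrite big_bool /=.
case: (x \in S) => /=; rewrite ?mulr1 ?mulr0 ?addr0 //.
by rewrite addrC subrK.
Qed.

Lemma hpos (R : realType) (x y z : R) : 0 <= z -> y <= x -> 0 <= x * z + - (z * y).
Proof. move=> z0 yx; rewrite [x * z]mulrC -mulrN -mulrDr mulr_ge0 // subr_ge0 //. Qed.

Lemma hneg (R : realType) (x y z : R) : z <= 0 -> x <= y -> 0 <= x * z + - (z * y).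
Proof.
move=> z0 yx; rewrite [x * z]mulrC -mulrN -mulrDr -mulrNN mulr_ge0 ?oppr_ge0 //.
by rewrite subr_le0.
Qed.

Theorem lemma1 (R : realType) (T : finType) (RA RD : {set T}) (p q alpha : R) :
  [disjoint RA & RD] -> RA :|: RD = [set: T] -> (0 < #|RD|)%N ->
  0 < p < 1 -> 0 < q < 1 -> 0 < alpha < 1 / 2 ->
  let rho := q / (p + q) in
  let n : R := #|T|%:R in
  let r : R := #|RA|%:R / #|RD|%:R in
  Prob rho (phi_ge RA RD ((1 + 2 * alpha / (1 - alpha)) * r)) <
    (expR alpha / (1 + alpha) `^ (1 + alpha)) `^ (rho * n * r / (1 + r)) +
    (expR (- alpha) / (1 - alpha) `^ (1 - alpha)) `^ (rho * n / (1 + r)).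
Proof.
move=> dis UT d0 /andP[p0 p1] /andP[q0 q1] /andP[a0 a1].
cbv zeta.
set rho := q / (p + q).
set n : R := #|T|%:R.
set r : R := #|RA|%:R / #|RD|%:R.
have h1a : 0 < 1 - alpha by lra.
have h1b : 0 < 1 + alpha by lra.
have al1 : alpha < 1 by lra.
have rho0 : 0 < rho by rewrite /rho divr_gt0 // addr_gt0.
have rho1 : rho < 1 by rewrite /rho ltr_pdivrMr ?addr_gt0 // mul1r ltrDr.
have nE : n = #|RA|%:R + #|RD|%:R.
  rewrite /n -cardsT -UT cardsU.
  move: dis; rewrite -setI_eq0 => /eqP ->; rewrite cards0 subn0 natrD //.
set a : R := #|RA|%:R in r nE *.
set d : R := #|RD|%:R in r nE *.
have dpos : 0 < d by rewrite /d ltr0n.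
have apos : 0 <= a by rewrite /a ler0n.
have z1E : rho * n * r / (1 + r) = rho * a.
  rewrite nE /r; field; apply/andP; split; rewrite ?gt_eqF //.
  by rewrite -natrD ltr0n addn_gt0 d0.
have z2E : rho * n / (1 + r) = rho * d.
  rewrite nE /r; field; apply/andP; split; rewrite ?gt_eqF //.
  by rewrite -natrD ltr0n addn_gt0 d0.
rewrite z1E z2E.
set t := (1 + 2 * alpha / (1 - alpha)) * r.
have tc : t * ((1 - alpha) * rho * d) = (1 + alpha) * rho * a.
  rewrite /t /r; field; rewrite gt_eqF //; apply/andP; split; rewrite ?gt_eqF //; lra.
have t0 : 0 <= t.
  rewrite /t mulr_ge0 // ?divr_ge0 ?(ltW dpos) //.
  rewrite addr_ge0 // divr_ge0 //; lra.
clearbody t r.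
have lam0 : 0 < ln (1 + alpha) by apply: ln_gt0; lra.
have mu0 : ln (1 - alpha) < 0 by apply: ln_lt0; apply/andP; split; lra.
set lam := ln (1 + alpha) in lam0 *.
set mu := ln (1 - alpha) in mu0 *.
have T1E : (expR alpha / (1 + alpha) `^ (1 + alpha)) `^ (rho * a) =
    expR ((alpha - (1 + alpha) * lam) * (rho * a)).
  rewrite -{1}[expR alpha / _]lnK ?posrE ?divr_gt0 ?expR_gt0 ?powR_gt0 //; try lra.
  rewrite -expRM ln_div ?posrE ?expR_gt0 ?powR_gt0 ?expRK ?ln_powR //; lra.
have T2E : (expR (- alpha) / (1 - alpha) `^ (1 - alpha)) `^ (rho * d) =
    expR ((- alpha - (1 - alpha) * mu) * (rho * d)).
  rewrite -{1}[expR (- alpha) / _]lnK ?posrE ?divr_gt0 ?expR_gt0 ?powR_gt0 //; try lra.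
  rewrite -expRM ln_div ?posrE ?expR_gt0 ?powR_gt0 ?expRK ?ln_powR //; lra.
rewrite T1E T2E.
set c1 := (1 + alpha) * rho * a in tc *.
set c2 := (1 - alpha) * rho * d in tc *.
have c2pos : 0 < c2.
  exact: mulr_gt0 (mulr_gt0 h1a rho0) dpos.
pose f := fun w : outcome T => expR lam ^+ num_online RA w * expR (- (lam * c1)) +
   expR mu ^+ num_online RD w * expR (- (mu * c2)).
have Pge0 (w : outcome T) : 0 <= outcome_prob rho w.
  by apply: prodr_ge0 => x _; case: (w x); rewrite ?subr_ge0 ltW.
have key w : phi_ge RA RD t w -> 1 <= f w.
  rewrite /phi_ge /f => Ew.
  set X := num_online RA w in Ew *; set Y := num_online RD w in Ew *.
  have e1 : 0 <= expR lam ^+ X * expR (- (lam * c1)) by rewrite mulr_ge0 ?exprn_ge0 ?expR_ge0.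
  have e2 : 0 <= expR mu ^+ Y * expR (- (mu * c2)) by rewrite mulr_ge0 ?exprn_ge0 ?expR_ge0.
  case: (lerP c1 X%:R) => h1.
    apply: (@le_trans _ _ (expR lam ^+ X * expR (- (lam * c1)))); last by rewrite lerDl.
    rewrite -expRM_natl -expRD leNgt expR_lt1 -leNgt; exact: hpos (ltW lam0) h1.
  case: (lerP Y%:R c2) => h2.
    apply: (@le_trans _ _ (expR mu ^+ Y * expR (- (mu * c2)))); last by rewrite lerDr.
    rewrite -expRM_natl -expRD leNgt expR_lt1 -leNgt; exact: hneg (ltW mu0) h2.
  have Ypos : 0 < (Y%:R : R) := lt_trans c2pos h2.
  have Y0 : (Y == 0)%N = false by apply/negbTE; rewrite -lt0n -(ltr0n R).
  have hl : X%:R / Y%:R < t.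
    rewrite ltr_pdivrMr //; apply: (lt_le_trans h1); rewrite -tc.
    by rewrite -subr_ge0 -mulrBr mulr_ge0 // subr_ge0 ltW.
  by move: Ew; rewrite Y0 /= leNgt hl.
have bound : Prob rho (phi_ge RA RD t) <= \sum_(w : outcome T) outcome_prob rho w * f w.
  rewrite /Prob [X in X <= _]big_mkcond /=; apply: ler_sum => w _; case: ifP => Ew.
    by rewrite -{1}[outcome_prob rho w]mulr1 -subr_ge0 -mulrBr mulr_ge0 ?Pge0 // subr_ge0 key.
  by apply: mulr_ge0 (Pge0 w) _; rewrite /f addr_ge0 // mulr_ge0 ?exprn_ge0 ?expR_ge0.
have sumE : \sum_(w : outcome T) outcome_prob rho w * f w =
   (1 + rho * alpha) ^+ #|RA| * expR (- (lam * c1)) +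
   (1 - rho * alpha) ^+ #|RD| * expR (- (mu * c2)).
  rewrite /f; under eq_bigr => w _ do rewrite mulrDr !mulrA.
  have lamE : expR lam = 1 + alpha by rewrite /lam lnK ?posrE.
  have muE : expR mu = 1 - alpha by rewrite /mu lnK ?posrE.
  rewrite big_split /= -!big_distrl /= !mgf lamE muE.
  congr (_ ^+ _ * _ + _ ^+ _ * _); [ring | | ring | ].
    by rewrite /c1 /rho !mulrA.
  by rewrite /c2 /rho !mulrA.
apply: (le_lt_trans bound); rewrite sumE; apply: ler_ltD.
  apply: (@le_trans _ _ (expR (rho * alpha) ^+ #|RA| * expR (- (lam * c1)))).
    apply: ler_wpM2r; first exact: expR_ge0.
    have hx : 0 <= 1 + rho * alpha by rewrite addr_ge0 // mulr_ge0 // ltW.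
    by apply: lerXn2r; rewrite ?nnegrE ?expR_ge0 ?expR_ge1Dx.
  rewrite -expRM_natl -expRD ler_expR /c1 le_eqVlt; apply/orP; left; apply/eqP; ring.
apply: (@lt_le_trans _ _ (expR (- (rho * alpha)) ^+ #|RD| * expR (- (mu * c2)))).
  rewrite ltr_pM2r ?expR_gt0 // ltrXn2r; first by rewrite -lt0n.
    by rewrite subr_ge0 ltW // -[1]mul1r ltr_pM // ?ltW.
  by rewrite -[_ - _]/(1 + - (rho * alpha)) expR_gt1Dx // oppr_eq0 gt_eqF // mulr_gt0.
rewrite -expRM_natl -expRD ler_expR /c2 le_eqVlt; apply/orP; left; apply/eqP; ring.
Qed.
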